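(* In the model described in the context, there exist choices of the model primitives (group fractions $\lambda_0,\lambda_1$, densities $f_{e,s}$ satisfying the monotone likelihood ratio property, $v_q,v_u,\omega>0$, and $\underline c<\bar c$) for which there is an equilibrium under the color-blind policy, $(\tilde\theta_0,\tilde\theta_1,\pi_0,\pi_1)$ with $\tilde\theta_0=\tilde\theta_1$, such that $\pi_0\neq\pi_1$.
   Context: Two groups $s\in\{0,1\}$ with population fractions $\lambda_1\in(0,1)$, $\lambda_0=1-\lambda_1$. Each applicant draws a cost $c$ uniformly on $[\underline c,\bar c]$ and chooses effort $e\in\{q,u\}$. A classifier score $\theta\in\mathbb{R}$ has density $f_{e,s}$ and distribution function $F_{e,s}$ given effort $e$ and group $s$; monotone likelihood ratio property: $f_{q,s}(\theta)/f_{u,s}(\theta)$ strictly increasing in $\theta$ for each $s$. Firm gains $v_q>0$ per accepted qualified applicant and loses $v_u>0$ per accepted unqualified one; $r=v_q/v_u$; accepted applicants get $\omega>0$. Let $\tilde c_s(\theta)=\omega[F_{u,s}(\theta)-F_{q,s}(\theta)]$ and $G(c)=\min\!\left(1,\frac{c-\underline c}{\bar c-\underline c}\right)$. An equilibrium under the color-blind (CB) policy is a quadruple $(\tilde\theta_0,\tilde\theta_1,\pi_0,\pi_1)$ with $\tilde\theta:=\tilde\theta_0=\tilde\theta_1$, $\pi_s=G(\tilde c_s(\tilde\theta))$ for $s=0,1$, and $$\lambda_0\pi_0+\lambda_1\pi_1=\frac{\phi(\tilde\theta)}{r+\phi(\tilde\theta)},\qquad \phi(\theta)=\frac{\lambda_0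 f_{u,0}(\theta)+\lambda_1 f_{u,1}(\theta)}{\lambda_0 f_{q,0}(\theta)+\lambda_1 f_{q,1}(\theta)}.$$ *)

(* Defs.v *)
From Stdlib Require Import Reals.
From Coquelicot Require Import Coquelicot.
Open Scope R_scope.

(* Effort levels: q (qualified) and u (unqualified).  Groups s are [bool]
   (false = group 0, true = group 1). *)
Inductive effort := eq_ | eu.

(* f is a probability density on R with distribution function F:
   f >= 0 (here: f > 0, needed for the likelihood ratio to be defined),
   F theta = int_{-oo}^theta f, and int_{-oo}^{+oo} f = 1. *)
Definition is_density (f F : R -> R) : Prop :=
  (forall t, 0 < f t) /\
  (forall t, is_RInt_gen f (Rbar_locally m_infty) (at_point t) (F t)) /\
  is_RInt_gen f (Rbar_locally m_infty) (Rbar_locally p_infty) 1.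

Definition MLRP (fq fu : R -> R) : Prop :=
  forall t1 t2, t1 < t2 -> fq t1 / fu t1 < fq t2 / fu t2.

Definition ctilde (omega : R) (F : effort -> bool -> R -> R) (s : bool) (t : R) : R :=
  omega * (F eu s t - F eq_ s t).

Definition Gcost (cl ch c : R) : R := Rmin 1 ((c - cl) / (ch - cl)).

Definition phi (lam0 lam1 : R) (f : effort -> bool -> R -> R) (t : R) : R :=
  (lam0 * f eu false t + lam1 * f eu true t) /
  (lam0 * f eq_ false t + lam1 * f eq_ true t).

Definition CB_equilibrium (lam0 lam1 vq vu omega cl ch : R)
  (f F : effort -> bool -> R -> R) (th0 th1 pi0 pi1 : R) : Prop :=
  th0 = th1 /\
  pi0 = Gcost cl ch (ctilde omega F false th0) /\
  pi1 = Gcost cl ch (ctilde omega F true th1) /\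
  lam0 * pi0 + lam1 * pi1 =
    phi lam0 lam1 f th0 / (vq / vu + phi lam0 lam1 f th0).

(* Main.v *)
Require Import Defs.
From Stdlib Require Import Reals.
From Coquelicot Require Import Coquelicot.
Open Scope R_scope.
From Stdlib Require Import Lra FunctionalExtensionality.
Definition L (t : R) := exp t / (1 + exp t).
Definition g (t : R) := exp t / ((1 + exp t) * (1 + exp t)).

Lemma Lpos t : 0 < 1 + exp t.
Proof. generalize (exp_pos t); lra. Qed.

Lemma L_der t : is_derive L t (g t).
Proof.
  unfold L, g. pose proof (Lpos t) as H.
  auto_derive. lra. field. lra.
Qed.

Lemma lim_eq f x l l' : is_lim f x l -> l = l' -> is_lim f x l'.
Proof. intros H ->; exact H. Qed.

Lemma L_m : is_lim L m_infty 0.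
Proof.
  eapply lim_eq.
  eapply is_lim_div. apply is_lim_exp_m.
  eapply is_lim_plus. apply is_lim_const. apply is_lim_exp_m.
  simpl. reflexivity. simpl. intro H; injection H; lra.
  simpl. exact I. simpl. f_equal. field.
Qed.

Lemma L_p : is_lim L p_infty 1.
Proof.
  apply is_lim_ext with (fun y => 1 - / (1 + exp y)).
  intro y. unfold L. pose proof (Lpos y). field. lra.
  eapply lim_eq.
  eapply is_lim_minus. apply is_lim_const.
  eapply is_lim_inv.
  eapply is_lim_plus. apply is_lim_const. apply is_lim_exp_p.
  simpl. reflexivity. simpl. discriminate.
  simpl. reflexivity. simpl. f_equal. ring.
Qed.

Lemma dens h H : (forall t, 0 < h t) -> (forall t, is_derive H t (h t)) ->
  (forall t, continuous h t) -> is_lim H m_infty 0 -> is_lim H p_infty 1 ->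
  is_density h H.
Proof.
  intros hp hd hc hm hpi.
  assert (E : Derive H = h).
  { apply functional_extensionality. intro t. apply is_derive_unique, hd. }
  split; [exact hp|split].
  - intro t. rewrite <- E.
    replace (H t) with (H t - 0) by ring.
    apply is_RInt_gen_Derive.
    + exists (fun _ => True) (fun _ => True).
      apply filter_true. apply filter_true.
      intros; eexists; apply hd.
    + exists (fun _ => True) (fun _ => True).
      apply filter_true. apply filter_true.
      intros; rewrite E; apply hc.
    + exact hm.
    + intros P HP. unfold filtermap, at_point. apply locally_singleton. exact HP.
  - rewrite <- E.
    replace 1 with (1 - 0) by ring.
    apply is_RInt_gen_Derive.
    + exists (fun _ => True) (fun _ => True).
      apply filter_true. apply filter_true.
      intros; eexists; apply hd.
    + exists (fun _ => True) (fun _ => True).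
      apply filter_true. apply filter_true.
      intros; rewrite E; apply hc.
    + exact hm.
    + exact hpi.
Qed.

Lemma g_pos t : 0 < g t.
Proof. unfold g. pose proof (Lpos t). pose proof (exp_pos t).
  apply Rdiv_lt_0_compat; nra. Qed.

Lemma L_pos t : 0 < L t.
Proof. unfold L. pose proof (Lpos t). pose proof (exp_pos t).
  apply Rdiv_lt_0_compat; nra. Qed.

Lemma g_cont t : continuous g t.
Proof. apply (ex_derive_continuous (K:=R_AbsRing) (V:=R_NormedModule) g). unfold g. pose proof (Lpos t).
  auto_derive. nra. Qed.

Lemma L_cont t : continuous L t.
Proof. apply (ex_derive_continuous (K:=R_AbsRing) (V:=R_NormedModule) L). eexists; apply L_der. Qed.

Lemma L_incr t1 t2 : t1 < t2 -> L t1 < L t2.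
Proof.
  intro Ht. assert (forall t, L t = 1 - / (1 + exp t)).
  { intro t. unfold L. pose proof (Lpos t). field. lra. }
  rewrite !H. pose proof (Lpos t1). pose proof (exp_increasing _ _ Ht).
  assert (/ (1 + exp t2) < / (1 + exp t1)). apply Rinv_lt_contravar; nra.
  lra.
Qed.

Definition ff (e : effort) (s : bool) (t : R) : R :=
  match e, s with
  | eu, _ => g t
  | eq_, false => 2 * L t * g t
  | eq_, true => 3 * (L t * L t) * g t
  end.

Definition FF (e : effort) (s : bool) (t : R) : R :=
  match e, s with
  | eu, _ => L t
  | eq_, false => L t * L t
  | eq_, true => L t * L t * L t
  end.

Lemma L0 : L 0 = 1/2.
Proof. unfold L. rewrite exp_0. field. Qed.
Lemma g0 : g 0 = 1/4.
Proof. unfold g. rewrite exp_0. field. Qed.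

Lemma deq f x l l' : is_derive (K:=R_AbsRing) (V:=R_NormedModule) f x l -> l = l' -> is_derive f x l'.
Proof. intros H ->; exact H. Qed.

Lemma der_LL t : is_derive (fun t => L t * L t) t (2 * L t * g t).
Proof.
  eapply deq. apply (is_derive_mult (K:=R_AbsRing) L L); [apply L_der|apply L_der|intros; apply Rmult_comm].
  unfold plus, mult; simpl. ring.
Qed.

Lemma der_LLL t : is_derive (fun t => L t * L t * L t) t (3 * (L t * L t) * g t).
Proof.
  eapply deq. apply (is_derive_mult (K:=R_AbsRing) (fun t => L t * L t) L); [apply der_LL|apply L_der|intros; apply Rmult_comm].
  unfold plus, mult; simpl. ring.
Qed.

Lemma LL_m : is_lim (fun t => L t * L t) m_infty 0.
Proof. eapply lim_eq. apply is_lim_mult; [apply L_m|apply L_m|simpl; exact I]. simpl; f_equal; ring. Qed.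
Lemma LL_p : is_lim (fun t => L t * L t) p_infty 1.
Proof. eapply lim_eq. apply is_lim_mult; [apply L_p|apply L_p|simpl; exact I]. simpl; f_equal; ring. Qed.
Lemma LLL_m : is_lim (fun t => L t * L t * L t) m_infty 0.
Proof. eapply lim_eq. apply is_lim_mult; [apply LL_m|apply L_m|simpl; exact I]. simpl; f_equal; ring. Qed.
Lemma LLL_p : is_lim (fun t => L t * L t * L t) p_infty 1.
Proof. eapply lim_eq. apply is_lim_mult; [apply LL_p|apply L_p|simpl; exact I]. simpl; f_equal; ring. Qed.

Theorem proposition2 :
  exists (lam0 lam1 vq vu omega cl ch : R) (f F : effort -> bool -> R -> R),
    0 < lam1 < 1 /\ lam0 = 1 - lam1 /\
    (forall e s, is_density (f e s) (F e s)) /\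
    (forall s, MLRP (f eq_ s) (f eu s)) /\
    0 < vq /\ 0 < vu /\ 0 < omega /\ cl < ch /\
    exists th0 th1 pi0 pi1 : R,
      CB_equilibrium lam0 lam1 vq vu omega cl ch f F th0 th1 pi0 pi1 /\
      pi0 <> pi1.
Proof.
  exists (1/2), (1/2), (88/35), 1, 1, 0, 1, ff, FF.
  split; [lra|split; [lra|split; [|split; [|split; [lra|split; [lra|split; [lra|split; [lra|]]]]]]]].
  - intros e s; destruct e, s; simpl.
    + apply dens.
      * intro t. pose proof (g_pos t); pose proof (L_pos t). apply Rmult_lt_0_compat; [|lra]. apply Rmult_lt_0_compat; nra.
      * apply der_LLL.
      * intro t. apply (ex_derive_continuous (K:=R_AbsRing) (V:=R_NormedModule) (fun t => 3 * (L t * L t) * g t)).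
        unfold L, g. pose proof (Lpos t). auto_derive. nra.
      * apply LLL_m.
      * apply LLL_p.
    + apply dens.
      * intro t. pose proof (g_pos t); pose proof (L_pos t). apply Rmult_lt_0_compat; [|lra]. apply Rmult_lt_0_compat; nra.
      * apply der_LL.
      * intro t. apply (ex_derive_continuous (K:=R_AbsRing) (V:=R_NormedModule) (fun t => 2 * L t * g t)).
        unfold L, g. pose proof (Lpos t). auto_derive. nra.
      * apply LL_m.
      * apply LL_p.
    + apply dens; [apply g_pos|apply L_der|apply g_cont|apply L_m|apply L_p].
    + apply dens; [apply g_pos|apply L_der|apply g_cont|apply L_m|apply L_p].
  - intros s t1 t2 Ht. pose proof (g_pos t1); pose proof (g_pos t2).
    pose proof (L_pos t1); pose proof (L_incr _ _ Ht).
    destruct s; simpl.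
    + replace (3 * (L t1 * L t1) * g t1 / g t1) with (3 * (L t1 * L t1)) by (field; lra).
      replace (3 * (L t2 * L t2) * g t2 / g t2) with (3 * (L t2 * L t2)) by (field; lra).
      nra.
    + replace (2 * L t1 * g t1 / g t1) with (2 * L t1) by (field; lra).
      replace (2 * L t2 * g t2 / g t2) with (2 * L t2) by (field; lra).
      lra.
  - exists 0, 0, (1/4), (3/8).
    unfold CB_equilibrium, Gcost, ctilde, phi; simpl. rewrite L0, g0.
    replace (1 - 0) with 1 by ring.
    split; [|lra]. split; [reflexivity|].
    split; [rewrite Rmin_right; lra|].
    split; [rewrite Rmin_right; lra|].
    field.
Qed.
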